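(* Let $m,n,p,q$ be arbitrary integers and define $$P(x_1,x_2,x_3,x_4)=\begin{bmatrix}x_1 & x_2 & x_3 & x_4\\ -nx_2 & x_1+mx_2 & -nx_4 & x_3+mx_4\\ -qx_3 & -qx_4 & x_1+px_3 & x_2+px_4\\ qnx_4 & -q(x_3+mx_4) & -nx_2-pnx_4 & x_1+mx_2+p(x_3+mx_4)\end{bmatrix}.$$ Then for independent variables $x_i,y_i$, $P(x_1,\dots,x_4)P(y_1,\dots,y_4)=P(z_1,\dots,z_4)$, where $z_1=x_1y_1-nx_2y_2-qx_3y_3+qnx_4y_4$, $z_2=x_1y_2+x_2y_1+mx_2y_2-qx_3y_4-qx_4y_3-mqx_4y_4$, $z_3=x_1y_3-nx_2y_4+x_3y_1+px_3y_3-nx_4y_2-npx_4y_4$, $z_4=x_1y_4+x_2y_3+mx_2y_4+x_3y_2+px_3y_4+x_4y_1+mx_4y_2+px_4y_3+mpx_4y_4$. Consequently the quaternary quartic form $f(x_1,\dots,x_4)=\det P(x_1,\dots,x_4)$ satisfies $f(x_1,\dots,x_4)f(y_1,\dots,y_4)=f(z_1,\dots,z_4)$. *)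

(* Defs.v *)
From HB Require Import structures.
From mathcomp Require Import all_boot all_order all_algebra.
Set Implicit Arguments. Unset Strict Implicit. Unset Printing Implicit Defensive.
Import Order.TTheory GRing.Theory Num.Theory.
Local Open Scope ring_scope.

Definition Pmat (R : comNzRingType) (m n p q : int) (x1 x2 x3 x4 : R) : 'M[R]_4 :=
  let m' := (m%:~R : R) in let n' := (n%:~R : R) in
  let p' := (p%:~R : R) in let q' := (q%:~R : R) in
  \matrix_(i < 4, j < 4)
    nth 0 (nth [::] [:: [:: x1; x2; x3; x4];
        [:: - n' * x2; x1 + m' * x2; - n' * x4; x3 + m' * x4];
        [:: - q' * x3; - q' * x4; x1 + p' * x3; x2 + p' * x4];
        [:: q' * n' * x4; - q' * (x3 + m' * x4); - n' * x2 - p' * n' * x4;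
            x1 + m' * x2 + p' * (x3 + m' * x4)] ] i) j.

Definition fquart (R : comNzRingType) (m n p q : int) (x1 x2 x3 x4 : R) : R :=
  \det (Pmat m n p q x1 x2 x3 x4).

(* Main.v *)
Require Import Defs.
From HB Require Import structures.
From mathcomp Require Import all_boot all_order all_algebra.
From mathcomp Require Import ring.
Import Order.TTheory GRing.Theory Num.Theory.
Local Open Scope ring_scope.

Theorem mainTheorem3 (R : comNzRingType) (m n p q : int)
    (x1 x2 x3 x4 y1 y2 y3 y4 : R) :
  let m' := (m%:~R : R) in let n' := (n%:~R : R) in
  let p' := (p%:~R : R) in let q' := (q%:~R : R) in
  let z1 := x1 * y1 - n' * x2 * y2 - q' * x3 * y3 + q' * n' * x4 * y4 in
  let z2 := x1 * y2 + x2 * y1 + m' * x2 * y2 - q' * x3 * y4 - q' * x4 * y3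
            - m' * q' * x4 * y4 in
  let z3 := x1 * y3 - n' * x2 * y4 + x3 * y1 + p' * x3 * y3 - n' * x4 * y2
            - n' * p' * x4 * y4 in
  let z4 := x1 * y4 + x2 * y3 + m' * x2 * y4 + x3 * y2 + p' * x3 * y4
            + x4 * y1 + m' * x4 * y2 + p' * x4 * y3 + m' * p' * x4 * y4 in
  Pmat m n p q x1 x2 x3 x4 *m Pmat m n p q y1 y2 y3 y4 = Pmat m n p q z1 z2 z3 z4 /\
  fquart m n p q x1 x2 x3 x4 * fquart m n p q y1 y2 y3 y4 = fquart m n p q z1 z2 z3 z4.
Proof.
move=> m' n' p' q' z1 z2 z3 z4.
have H : Pmat m n p q x1 x2 x3 x4 *m Pmat m n p q y1 y2 y3 y4 = Pmat m n p q z1 z2 z3 z4.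
  apply/matrixP => i j; rewrite !mxE !big_ord_recr big_ord0 /= !mxE /=.
  rewrite /z1 /z2 /z3 /z4 /m' /n' /p' /q'.
  case: i => [[|[|[|[|i]]]] Hi] //=; case: j => [[|[|[|[|j]]]] Hj] //=; ring.
split=> //.
by rewrite /fquart -det_mulmx H.
Qed.
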